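(* Let $\mathcal T$ be a pre-triangulated category. (1) $\mathcal T$ and $\mathcal T^{op}$ are fp-equivalent. (2) If $S$ is a Serre functor of $\mathcal T$, then $(\mathcal T,S)$ and $(\mathcal T^{op},S^{op})$ are fp-$S$-equivalent.
   Context: $\Bbbk$ is an algebraically closed field; categories are $\Bbbk$-linear. $\mathcal T^{op}$ is pre-triangulated with suspension induced by $\Sigma^{-1}$, and $S^{op}$ denotes the Serre functor of $\mathcal T^{op}$ induced by $S^{-1}$. In a pre-triangulated category with suspension $\Sigma$, an atomic object is $M$ with $\mathrm{Hom}(M,M)=\Bbbk$ and $\mathrm{Hom}(M,\Sigma^{-i}M)=0$ for all $i>0$; an atomic set of size $n$ is a set $\{X_1,\dots,X_n\}$ of nonzero atomic objects with $\dim_\Bbbk\mathrm{Hom}(X_i,X_j)=\delta_{ij}$. For an endofunctor $\sigma$, $\mathrm{fpdim}^n(\sigma)=\sup\rho\big((\dim_\Bbbk\mathrm{Hom}(X_i,\sigma X_j))_{i,j}\big)$ over atomic sets of size $n$ ($0$ if none), where $\rho$ is spectral radius (for entries $\pm\infty$, replace by $\pm x_{ij}$ and take $\liminf$ as all $x_{ij}\to\infty$). Two pre-triangulated categories $(\mathcal T_i,\Sigma_i)$ are fp-equivalent if $\mathrm{fpdim}^n(\Sigma_1^m)=\mathrm{fpdim}^n(\Sigma_2^m)$ for all $n\ge1$, $m\in\mathbb Z$. Two pre-triangulated categories with Serre functors $(\mathcal T_i,\Sigma_i,S_i)$ are fp-$S$-equivalent if $\mathrm{fpdim}^n(\Sigma_1^m\circ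 S_1^k)=\mathrm{fpdim}^n(\Sigma_2^m\circ S_2^k)$ for all $n\ge1$, $m,k\in\mathbb Z$. A Serre functor $S$ satisfies $\mathrm{Hom}(X,Y)^*\cong\mathrm{Hom}(Y,SX)$ naturally. *)

(* Defs.v *)
From HB Require Import structures.
From mathcomp Require Import all_boot all_order all_algebra.
From mathcomp Require Import boolp classical_sets reals constructive_ereal ereal.
From mathcomp Require Import complex.
Set Implicit Arguments. Unset Strict Implicit. Unset Printing Implicit Defensive.
Import Order.TTheory GRing.Theory Num.Theory.
Local Open Scope ring_scope.
Local Open Scope classical_set_scope.

Section LinCat.
Variable K : fieldType.

Record linCat := LinCat {
  Obj : Type;
  Hom : Obj -> Obj -> lmodType K;
  comp : forall X Y Z, Hom Y Z -> Hom X Y -> Hom X Z;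
  idm : forall X, Hom X X;
  compA : forall X Y Z W (f : Hom Z W) (g : Hom Y Z) (h : Hom X Y),
    comp f (comp g h) = comp (comp f g) h;
  comp1m : forall X Y (f : Hom X Y), comp (idm Y) f = f;
  compm1 : forall X Y (f : Hom X Y), comp f (idm X) = f;
  compDl : forall X Y Z (a : K) (f g : Hom Y Z) (h : Hom X Y),
    comp (a *: f + g) h = a *: comp f h + comp g h;
  compDr : forall X Y Z (a : K) (f : Hom Y Z) (g h : Hom X Y),
    comp f (a *: g + h) = a *: comp f g + comp f h
}.

End LinCat.

Arguments Hom {K} C : rename.
Arguments comp {K C X Y Z} : rename.
Arguments idm {K C} X : rename.

Section Op.
Variables (K : fieldType) (C : linCat K).

Definition op_Hom (X Y : Obj C) : lmodType K := Hom C Y X.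
Definition op_comp (X Y Z : Obj C) (f : op_Hom Y Z) (g : op_Hom X Y) : op_Hom X Z :=
  @comp K C Z Y X g f.

Lemma op_compA X Y Z W (f : op_Hom Z W) (g : op_Hom Y Z) (h : op_Hom X Y) :
  op_comp f (op_comp g h) = op_comp (op_comp f g) h.
Proof. by rewrite /op_comp compA. Qed.
Lemma op_comp1m X Y (f : op_Hom X Y) : op_comp (idm Y) f = f.
Proof. exact: compm1. Qed.
Lemma op_compm1 X Y (f : op_Hom X Y) : op_comp f (idm X) = f.
Proof. exact: comp1m. Qed.
Lemma op_compDl X Y Z (a : K) (f g : op_Hom Y Z) (h : op_Hom X Y) :
  op_comp (a *: f + g) h = a *: op_comp f h + op_comp g h.
Proof. exact: compDr. Qed.
Lemma op_compDr X Y Z (a : K) (f : op_Hom Y Z) (g h : op_Hom X Y) :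
  op_comp f (a *: g + h) = a *: op_comp f g + op_comp f h.
Proof. exact: compDl. Qed.

Definition opCat : linCat K :=
  @LinCat K (Obj C) op_Hom op_comp (@idm K C)
    op_compA op_comp1m op_compm1 op_compDl op_compDr.

End Op.

Section Basic.
Variables (K : fieldType) (C : linCat K).
Local Notation Hom := (Hom C).

Definition is_iso (X Y : Obj C) (f : Hom X Y) : Prop :=
  exists g : Hom Y X, comp g f = idm X /\ comp f g = idm Y.

Definition zero_obj (Z : Obj C) : Prop := idm Z = 0.

Definition biproduct (X Y P : Obj C) (i1 : Hom X P) (i2 : Hom Y P)
  (p1 : Hom P X) (p2 : Hom P Y) : Prop :=
  [/\ comp p1 i1 = idm X, comp p2 i2 = idm Y, comp p1 i2 = 0,
      comp p2 i1 = 0 & comp i1 p1 + comp i2 p2 = idm P].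

Definition additive_cat : Prop :=
  (exists Z, zero_obj Z) /\
  forall X Y : Obj C, exists P (i1 : Hom X P) (i2 : Hom Y P) (p1 : Hom P X)
    (p2 : Hom P Y), biproduct i1 i2 p1 p2.

Record functor := Functor {
  fobj : Obj C -> Obj C;
  fmap : forall X Y, Hom X Y -> Hom (fobj X) (fobj Y);
  fmapD : forall X Y (a : K) (f g : Hom X Y),
    fmap (a *: f + g) = a *: fmap f + fmap g;
  fmap1 : forall X, fmap (idm X) = idm (fobj X);
  fmapM : forall X Y Z (f : Hom Y Z) (g : Hom X Y),
    fmap (comp f g) = comp (fmap f) (fmap g)
}.

Definition quasi_inverse (F G : functor) : Prop :=
  (exists alpha : forall X, Hom (fobj F (fobj G X)) X,
     (forall X, is_iso (alpha X)) /\
     forall X Y (f : Hom X Y),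
       comp (alpha Y) (fmap F (fmap G f)) = comp f (alpha X)) /\
  (exists beta : forall X, Hom (fobj G (fobj F X)) X,
     (forall X, is_iso (beta X)) /\
     forall X Y (f : Hom X Y),
       comp (beta Y) (fmap G (fmap F f)) = comp f (beta X)).

End Basic.

Arguments functor {K} C.
Arguments fobj {K C} f X : rename.
Arguments fmap {K C} f {X Y} : rename.

Section PreTri.
Variables (K : fieldType) (C : linCat K) (Sig : functor C).
Local Notation Hom := (Hom C).

Record triangle := Tri {
  tX : Obj C; tY : Obj C; tZ : Obj C;
  tf : Hom tX tY; tg : Hom tY tZ; th : Hom tZ (fobj Sig tX) }.

Definition tri_morph (T1 T2 : triangle) (u : Hom (tX T1) (tX T2))
  (v : Hom (tY T1) (tY T2)) (w : Hom (tZ T1) (tZ T2)) : Prop :=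
  [/\ comp (tf T2) u = comp v (tf T1),
      comp (tg T2) v = comp w (tg T1) &
      comp (th T2) w = comp (fmap Sig u) (th T1)].

Definition tri_iso (T1 T2 : triangle) : Prop :=
  exists (u : Hom (tX T1) (tX T2)) (v : Hom (tY T1) (tY T2))
    (w : Hom (tZ T1) (tZ T2)), [/\ tri_morph u v w, is_iso u, is_iso v & is_iso w].

Definition pretriangulation (D : triangle -> Prop) : Prop :=
  [/\
      (forall T1 T2, tri_iso T1 T2 -> D T1 -> D T2),
      (forall X, exists Z (g : Hom X Z) (h : Hom Z (fobj Sig X)),
          zero_obj Z /\ D (@Tri X X Z (idm X) g h)),
      (forall X Y (f : Hom X Y), exists Z (g : Hom Y Z) (h : Hom Z (fobj Sig X)),
          D (Tri f g h)),
      (forall X Y Z (f : Hom X Y) (g : Hom Y Z) (h : Hom Z (fobj Sig X)),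
          D (Tri f g h) <-> D (Tri g h (- fmap Sig f))) &
      (forall T1 T2, D T1 -> D T2 ->
         forall (u : Hom (tX T1) (tX T2)) (v : Hom (tY T1) (tY T2)),
           comp (tf T2) u = comp v (tf T1) ->
           exists w : Hom (tZ T1) (tZ T2), tri_morph u v w)].

End PreTri.

Definition pretriangulated (K : fieldType) (C : linCat K) (Sig Sig' : functor C) : Prop :=
  [/\ additive_cat C, quasi_inverse Sig Sig' & exists D, pretriangulation (Sig:=Sig) D].

(* S is an equivalence (with quasi-inverse S') together with isomorphisms
   Hom(Y, S X) ~= Hom(X, Y)^* (as linear maps onto the linear dual), natural
   in X and Y. *)
Definition serre_functor (K : fieldType) (C : linCat K) (S S' : functor C) : Prop :=
  quasi_inverse S S' /\
  exists eta : forall X Y : Obj C, Hom C Y (fobj S X) -> Hom C X Y -> K,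
    [/\
        (forall X Y (a : K) g1 g2 h,
           eta X Y (a *: g1 + g2) h = a * eta X Y g1 h + eta X Y g2 h),
        (forall X Y (a : K) g h1 h2,
           eta X Y g (a *: h1 + h2) = a * eta X Y g h1 + eta X Y g h2),
        (forall X Y g1 g2, (forall h, eta X Y g1 h = eta X Y g2 h) -> g1 = g2),
        (forall X Y (phi : Hom C X Y -> K),
           (forall (a : K) h1 h2, phi (a *: h1 + h2) = a * phi h1 + phi h2) ->
           exists g, forall h, eta X Y g h = phi h) &
        (forall X X' Y (a : Hom C X X') (g : Hom C Y (fobj S X)) (h : Hom C X' Y),
           eta X' Y (comp (fmap S a) g) h = eta X Y g (comp h a)) /\
        (forall X Y Y' (b : Hom C Y' Y) (g : Hom C Y (fobj S X)) (h : Hom C X Y'),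
           eta X Y' (comp g b) h = eta X Y g (comp b h))].

Section FP.
Variables (R : realType) (K : fieldType).

Definition lin_indep (V : lmodType K) (k : nat) (s : 'I_k -> V) : Prop :=
  forall c : 'I_k -> K, \sum_(i < k) c i *: s i = 0 -> forall i, c i = 0.

Definition dimv (V : lmodType K) : \bar R :=
  ereal_sup [set (k%:R)%:E | k in [set k : nat | exists s : 'I_k -> V, lin_indep s]].

Definition spectral_radius (n : nat) (A : 'M[R]_n) : R :=
  sup [set complex.ComplexField.Normc.normc l | l in
       [set l : complex.complex R |
         eigenvalue (map_mx (fun r : R => complex.Complex r 0) A) l]].

Definition fin_inst (n : nat) (D : 'M[\bar R]_n) (x : 'I_n -> 'I_n -> R) : 'M[R]_n :=
  \matrix_(i, j) match D i j with
                 | EFin r => r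
                 | +oo%E => x i j
                 | -oo%E => - x i j
                 end.

(* rho(D), with the liminf as all x_ij -> +oo *)
Definition fp_rho (n : nat) (D : 'M[\bar R]_n) : \bar R :=
  ereal_sup [set ereal_inf [set (spectral_radius (fin_inst D x))%:E |
                              x in [set x : 'I_n -> 'I_n -> R | forall i j, M <= x i j]]
            | M in [set: R]].

Variables (C : linCat K) (Sinv : Obj C -> Obj C).
(* Sinv is the object map of Sigma^{-1} *)

Definition atomic (M : Obj C) : Prop :=
  dimv (Hom C M M) = 1%E /\
  forall i : nat, (0 < i)%N -> dimv (Hom C M (iter i Sinv M)) = 0%E.

Definition atomic_set (n : nat) (X : 'I_n -> Obj C) : Prop :=
  [/\ forall i, idm (X i) != 0,
      forall i, atomic (X i) &
      forall i j, dimv (Hom C (X i) (X j)) = ((i == j)%:R)%:E].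

Definition fpdim (n : nat) (sigma : Obj C -> Obj C) : \bar R :=
  if pselect (exists X : 'I_n -> Obj C, atomic_set X) then
    ereal_sup [set fp_rho (\matrix_(i, j) dimv (Hom C (X i) (sigma (X j))))
              | X in [set X : 'I_n -> Obj C | atomic_set X]]
  else 0%E.

End FP.

Definition zpow (T : Type) (f g : T -> T) (m : int) : T -> T :=
  match m with
  | Posz k => iter k f
  | Negz k => iter k.+1 g
  end.

Definition fp_equivalent (R : realType) (K : fieldType)
  (C1 : linCat K) (Sig1 Sig1' : Obj C1 -> Obj C1)
  (C2 : linCat K) (Sig2 Sig2' : Obj C2 -> Obj C2) : Prop :=
  forall (n : nat) (m : int), (1 <= n)%N ->
    fpdim R Sig1' n (zpow Sig1 Sig1' m) = fpdim R Sig2' n (zpow Sig2 Sig2' m).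

Definition fpS_equivalent (R : realType) (K : fieldType)
  (C1 : linCat K) (Sig1 Sig1' S1 S1' : Obj C1 -> Obj C1)
  (C2 : linCat K) (Sig2 Sig2' S2 S2' : Obj C2 -> Obj C2) : Prop :=
  forall (n : nat) (m k : int), (1 <= n)%N ->
    fpdim R Sig1' n (fun X => zpow Sig1 Sig1' m (zpow S1 S1' k X)) =
    fpdim R Sig2' n (fun X => zpow Sig2 Sig2' m (zpow S2 S2' k X)).

(* Main.v *)
Require Import Defs.
From HB Require Import structures.
From mathcomp Require Import all_boot all_order all_algebra.
From mathcomp Require Import boolp classical_sets reals constructive_ereal ereal.
From mathcomp Require Import complex.
Set Implicit Arguments. Unset Strict Implicit. Unset Printing Implicit Defensive.
Import Order.TTheory GRing.Theory Num.Theory.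
Local Open Scope ring_scope.
Local Open Scope classical_set_scope.

Section LinAlg.
Variables (R : realType) (K : fieldType).

Definition lin (V W : lmodType K) (f : V -> W) :=
  forall a x y, f (a *: x + y) = a *: f x + f y.

Lemma lin0 (V W : lmodType K) (f : V -> W) : lin f -> f 0 = 0.
Proof.
move=> Hf; have := Hf (-1) 0 0; rewrite scaler0 addr0 scaleN1r => ->.
by rewrite addNr.
Qed.

Lemma linD (V W : lmodType K) (f : V -> W) : lin f -> forall x y, f (x + y) = f x + f y.
Proof. by move=> Hf x y; have := Hf 1 x y; rewrite !scale1r. Qed.

Lemma linZ (V W : lmodType K) (f : V -> W) : lin f -> forall a x, f (a *: x) = a *: f x.
Proof. by move=> Hf a x; have := Hf a x 0; rewrite addr0 (lin0 Hf) addr0. Qed.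

Lemma dimv_le (V W : lmodType K) (f : V -> W) :
  lin f -> injective f -> (Defs.dimv R V <= Defs.dimv R W)%E.
Proof.
move=> Hf Hi; rewrite /Defs.dimv; apply: ereal_sup_le.
move=> _ [k [s Hs] <-]; exists k => //; exists (f \o s) => c Hc i.
apply: Hs => //; apply: Hi; rewrite (lin0 Hf) -Hc.
rewrite (big_morph f (linD Hf) (lin0 Hf)); apply: eq_bigr => j _.
by rewrite (linZ Hf).
Qed.

Lemma dimv_eq (V W : lmodType K) (f : V -> W) (g : W -> V) :
  lin f -> injective f -> lin g -> injective g -> Defs.dimv R V = Defs.dimv R W.
Proof.
move=> ? ? ? ?; apply/eqP; rewrite eq_le; apply/andP; split; exact: dimv_le.
Qed.

End LinAlg.

Section Spec.
Variable R : realType.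

Lemma char_poly_tr (F : fieldType) n (A : 'M[F]_n) : char_poly A^T = char_poly A.
Proof.
rewrite /char_poly /char_poly_mx -[RHS]det_tr.
congr (\det _).
by rewrite [in RHS]linearB /= tr_scalar_mx map_trmx.
Qed.

Lemma sup_image_eq (T : Type) (g : T -> R) (P Q : T -> bool) :
  (forall x, P x = Q x) -> sup [set g x | x in [set x | P x]] = sup [set g x | x in [set x | Q x]].
Proof. by move=> H; rewrite (_ : P = Q) //; apply: funext. Qed.

Lemma spectral_radius_tr n (A : 'M[R]_n) : spectral_radius A^T = spectral_radius A.
Proof.
rewrite /spectral_radius; apply: sup_image_eq => l.
by rewrite !eigenvalue_root_char -map_trmx char_poly_tr.
Qed.

Lemma fin_inst_tr n (D : 'M[\bar R]_n) x :
  fin_inst D^T x = (fin_inst D (fun i j => x j i))^T.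
Proof. by apply/matrixP => i j; rewrite !mxE. Qed.

Lemma sup_inf_eq (S1 S2 : R -> set (\bar R)) : (forall M, S1 M = S2 M) ->
  ereal_sup [set ereal_inf (S1 M) | M in [set: R]] = ereal_sup [set ereal_inf (S2 M) | M in [set: R]].
Proof. by move=> H; rewrite (_ : S1 = S2) //; apply: funext. Qed.

Lemma fp_rho_tr n (D : 'M[\bar R]_n) : fp_rho D^T = fp_rho D.
Proof.
rewrite /fp_rho; apply: sup_inf_eq => M.
apply/seteqP; split => _ [x Hx <-].
- exists (fun i j => x j i); first by move=> i j; apply: Hx.
  by rewrite fin_inst_tr spectral_radius_tr.
- exists (fun i j => x j i); first by move=> i j; apply: Hx.
  by rewrite fin_inst_tr spectral_radius_tr.
Qed.

End Spec.

Section Cat.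
Variables (R : realType) (K : fieldType) (C : linCat K).
Local Notation Hom := (Defs.Hom C).
Local Notation dm := (Defs.dimv R).

Lemma iso_cancel_r X Y Z (u : Hom X Y) (f g : Hom Y Z) :
  is_iso u -> Defs.comp f u = Defs.comp g u -> f = g.
Proof.
move=> [v [vu uv]] H.
by rewrite -(Defs.compm1 f) -uv Defs.compA H -Defs.compA uv Defs.compm1.
Qed.

Lemma iso_cancel_l X Y Z (u : Hom Y Z) (f g : Hom X Y) :
  is_iso u -> Defs.comp u f = Defs.comp u g -> f = g.
Proof.
move=> [v [vu uv]] H.
by rewrite -(Defs.comp1m f) -vu -Defs.compA H Defs.compA vu Defs.comp1m.
Qed.

Lemma iso_comp X Y Z (f : Hom Y Z) (g : Hom X Y) :
  is_iso f -> is_iso g -> is_iso (Defs.comp f g).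
Proof.
move=> [f' [f1 f2]] [g' [g1 g2]]; exists (Defs.comp g' f'); split.
- by rewrite -Defs.compA (Defs.compA f' f) f1 Defs.comp1m g1.
- by rewrite -Defs.compA (Defs.compA g g') g2 Defs.comp1m f2.
Qed.

Lemma iso_inv X Y (f : Hom X Y) (g : Hom Y X) : Defs.comp g f = Defs.idm X -> Defs.comp f g = Defs.idm Y -> is_iso g.
Proof. by move=> H1 H2; exists f. Qed.

Definition oiso (X Y : Obj C) := exists u : Hom X Y, is_iso u.

Lemma oiso_refl X : oiso X X.
Proof. by exists (Defs.idm X); exists (Defs.idm X); rewrite Defs.comp1m. Qed.

Lemma oiso_sym X Y : oiso X Y -> oiso Y X.
Proof. by move=> [u [v [H1 H2]]]; exists v; exists u. Qed.

Lemma oiso_trans X Y Z : oiso X Y -> oiso Y Z -> oiso X Z.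
Proof. by move=> [u Hu] [v Hv]; exists (Defs.comp v u); apply: iso_comp. Qed.

Lemma fmap_iso (F : functor C) X Y (u : Hom X Y) : is_iso u -> is_iso (Defs.fmap F u).
Proof.
move=> [v [H1 H2]]; exists (Defs.fmap F v); split; by rewrite -Defs.fmapM ?H1 ?H2 Defs.fmap1.
Qed.

Lemma oiso_fobj (F : functor C) X Y : oiso X Y -> oiso (Defs.fobj F X) (Defs.fobj F Y).
Proof. by move=> [u Hu]; exists (Defs.fmap F u); apply: fmap_iso. Qed.

Lemma lin_compl X Y Z (u : Hom Y Z) : lin (fun f : Hom X Y => Defs.comp u f).
Proof. by move=> a f g; rewrite Defs.compDr. Qed.

Lemma lin_compr X Y Z (u : Hom X Y) : lin (fun f : Hom Y Z => Defs.comp f u).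
Proof. by move=> a f g; rewrite Defs.compDl. Qed.

Lemma dim_oiso_r A B B' : oiso B B' -> dm (Hom A B) = dm (Hom A B').
Proof.
move=> [u [v [H1 H2]]].
apply: (@dimv_eq R K _ _ (fun f => Defs.comp u f) (fun f => Defs.comp v f)).
- exact: lin_compl.
- by move=> f g; apply: iso_cancel_l; exists v.
- exact: lin_compl.
- by move=> f g; apply: iso_cancel_l; exists u.
Qed.

Section QI.
Variables (F G : functor C).

Lemma qi_sym : quasi_inverse F G -> quasi_inverse G F.
Proof. by move=> [H1 H2]; split. Qed.

Hypothesis qi : quasi_inverse F G.

Lemma faithful1 X Y (f g : Hom X Y) : Defs.fmap F f = Defs.fmap F g -> f = g.
Proof.
case: qi => _ [b [bi bn]] H.
apply: (iso_cancel_r (bi X)); by rewrite -!bn H.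
Qed.

Lemma faithful2 X Y (f g : Hom X Y) : Defs.fmap G f = Defs.fmap G g -> f = g.
Proof.
case: qi => [[a [ai an]] _] H.
apply: (iso_cancel_r (ai X)); by rewrite -!an H.
Qed.

Lemma full1 A B (u : Hom (Defs.fobj F A) (Defs.fobj F B)) : exists k, Defs.fmap F k = u.
Proof.
case: qi => _ [b [bi bn]].
have [c [c1 c2]] := bi A.
exists (Defs.comp (b B) (Defs.comp (Defs.fmap G u) c)).
apply: faithful2; apply: (iso_cancel_l (bi B)).
rewrite bn -!Defs.compA; congr (Defs.comp (b B)).
by rewrite c1 Defs.compm1.
Qed.

Lemma dim_adj A B : dm (Hom (Defs.fobj F A) B) = dm (Hom A (Defs.fobj G B)).
Proof.
case: (qi) => [[a [ai an]] [b [bi bn]]].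
have [c [c1 c2]] := bi A.
apply: (@dimv_eq R K _ _ (fun f => Defs.comp (Defs.fmap G f) c) (fun h => Defs.comp (a B) (Defs.fmap F h))).
- by move=> s f g; rewrite Defs.fmapD Defs.compDl.
- move=> f g H; apply: faithful2; apply: (iso_cancel_r (u := c)) => //.
  by exists (b A).
- by move=> s f g; rewrite Defs.fmapD Defs.compDr.
- move=> f g H; apply: faithful1; exact: (iso_cancel_l (ai B)).
Qed.

End QI.

Lemma dim_adj_iter (F G : functor C) : quasi_inverse F G ->
  forall n A B, dm (Hom (iter n (Defs.fobj F) A) B) = dm (Hom A (iter n (Defs.fobj G) B)).
Proof.
move=> qi; elim=> [//|n IH] A B.
by rewrite iterS (dim_adj qi) IH -iterSr.
Qed.

Lemma dim_adj_zpow (F G : functor C) : quasi_inverse F G ->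
  forall m A B, dm (Hom (zpow (Defs.fobj G) (Defs.fobj F) m A) B) =
                dm (Hom A (zpow (Defs.fobj F) (Defs.fobj G) m B)).
Proof.
move=> qi [k|k] A B /=.
- exact (dim_adj_iter (qi_sym qi) k A B).
- exact (dim_adj_iter qi k.+1 A B).
Qed.

End Cat.

Section Comm.
Variables (K : fieldType) (C : linCat K).
Local Notation Hom := (Defs.Hom C).
Local Notation cmp := Defs.comp.
Local Notation fo := Defs.fobj.
Local Notation fm := Defs.fmap.

Definition pres (f : Obj C -> Obj C) := forall X Y, oiso X Y -> oiso (f X) (f Y).
Definition comm_o (f h : Obj C -> Obj C) := forall X, oiso (f (h X)) (h (f X)).

Lemma pres_fobj (F : functor C) : pres (fo F).
Proof. move=> X Y; exact: oiso_fobj. Qed.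

Lemma pres_iter f n : pres f -> pres (iter n f).
Proof. by move=> Hf; elim: n => [//|n IH] X Y H /=; apply: Hf; apply: IH. Qed.

Lemma comm_sym f h : comm_o f h -> comm_o h f.
Proof. by move=> H X; apply: oiso_sym. Qed.

Lemma comm_iter_l f h n : pres f -> comm_o f h -> comm_o (iter n f) h.
Proof.
move=> Pf H; elim: n => [|n IH] X /=; first exact: oiso_refl.
apply: oiso_trans (H _); exact: Pf.
Qed.

Lemma comm_iter f h a b : pres f -> pres h -> comm_o f h -> comm_o (iter a f) (iter b h).
Proof.
move=> Pf Ph H; apply: comm_iter_l => //.
apply: comm_sym; apply: comm_iter_l => //; exact: comm_sym.
Qed.

Lemma comm_qi (F G : functor C) h : quasi_inverse F G -> pres h ->
  comm_o (fo F) h -> comm_o (fo G) h.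
Proof.
move=> [[a [ai an]] [b [bi bn]]] Ph H X.
have e1 : oiso (fo G (h X)) (fo G (h (fo F (fo G X)))).
  apply: oiso_fobj; apply: Ph; apply: oiso_sym; exists (a X); exact: ai.
apply: (oiso_trans e1).
have e2 : oiso (fo G (h (fo F (fo G X)))) (fo G (fo F (h (fo G X)))).
  apply: oiso_fobj; apply: oiso_sym; exact: H.
apply: (oiso_trans e2).
by exists (b _); exact: bi.
Qed.

Lemma comm_zpow f g h h' m k : pres f -> pres g -> pres h -> pres h' ->
  comm_o f h -> comm_o g h -> comm_o f h' -> comm_o g h' ->
  comm_o (zpow f g m) (zpow h h' k).
Proof.
move=> Pf Pg Ph Ph' H1 H2 H3 H4.
case: m => a; case: k => b /=; exact: comm_iter.
Qed.

Lemma yoneda Z A B (tA : Hom Z A -> K) (tB : Hom Z B -> K) :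
  (forall g1 g2 : Hom A A, (forall h, tA (cmp g1 h) = tA (cmp g2 h)) -> g1 = g2) ->
  (forall g1 g2 : Hom B B, (forall h, tB (cmp g1 h) = tB (cmp g2 h)) -> g1 = g2) ->
  (exists u : Hom A B, forall h, tB (cmp u h) = tA h) ->
  (exists v : Hom B A, forall h, tA (cmp v h) = tB h) -> oiso A B.
Proof.
move=> iA iB [u Hu] [v Hv]; exists u; exists v; split.
- apply: iA => h; by rewrite -Defs.compA Hv Hu Defs.comp1m.
- apply: iB => h; by rewrite -Defs.compA Hu Hv Defs.comp1m.
Qed.

End Comm.

Section Serre.
Variables (K : fieldType) (C : linCat K) (Sg Sg' S : functor C).
Local Notation Hom := (Defs.Hom C).
Local Notation cmp := Defs.comp.
Local Notation fo := Defs.fobj.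
Local Notation fm := Defs.fmap.
Hypothesis qi : quasi_inverse Sg Sg'.
Local Unset Implicit Arguments.
Variable eta : forall X Y : Obj C, Hom Y (fo S X) -> Hom X Y -> K.
Local Set Implicit Arguments.
Hypothesis l1 : forall X Y (a : K) g1 g2 h,
           eta X Y (a *: g1 + g2) h = a * eta X Y g1 h + eta X Y g2 h.
Hypothesis l2 : forall X Y (a : K) g h1 h2,
           eta X Y g (a *: h1 + h2) = a * eta X Y g h1 + eta X Y g h2.
Hypothesis einj : forall X Y g1 g2, (forall h, eta X Y g1 h = eta X Y g2 h) -> g1 = g2.
Hypothesis esurj : forall X Y (phi : Hom X Y -> K),
           (forall (a : K) h1 h2, phi (a *: h1 + h2) = a * phi h1 + phi h2) ->
           exists g, forall h, eta X Y g h = phi h.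
Hypothesis natY : forall X Y Y' (b : Hom Y' Y) (g : Hom Y (fo S X)) (h : Hom X Y'),
           eta X Y' (cmp g b) h = eta X Y g (cmp b h).

Definition pre A B (f : Hom (fo Sg A) (fo Sg B)) : Hom A B :=
  projT1 (cid (full1 qi f)).

Lemma preK A B (f : Hom (fo Sg A) (fo Sg B)) : fm Sg (pre f) = f.
Proof. exact: (projT2 (cid (full1 qi f))). Qed.

Lemma pre_fm A B (k : Hom A B) : pre (fm Sg k) = k.
Proof. by apply: (faithful1 qi); rewrite preK. Qed.

Lemma pre_comp A B D (f : Hom (fo Sg B) (fo Sg D)) (k : Hom A B) :
  pre (cmp f (fm Sg k)) = cmp (pre f) k.
Proof. by apply: (faithful1 qi); rewrite preK Defs.fmapM preK. Qed.

Lemma pre_lin A B a (f g : Hom (fo Sg A) (fo Sg B)) : pre (a *: f + g) = a *: pre f + pre g.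
Proof. by apply: (faithful1 qi); rewrite preK Defs.fmapD !preK. Qed.

Lemma eta_id X Y (g : Hom Y (fo S X)) (h : Hom X Y) : eta X X (cmp g h) (Defs.idm X) = eta X Y g h.
Proof. by rewrite natY Defs.compm1. Qed.

Lemma serre_comm X : oiso (fo S (fo Sg X)) (fo Sg (fo S X)).
Proof.
set Z := fo Sg X.
pose tA (f : Hom Z (fo S Z)) := eta Z Z f (Defs.idm Z).
pose tB (f : Hom Z (fo Sg (fo S X))) := eta X X (pre f) (Defs.idm X).
case: (qi) => [[al [ali aln]] _].
have tBc : forall Y (g : Hom Y (fo Sg (fo S X))) (k : Hom X (fo Sg' Y)),
    tB (cmp g (cmp (al Y) (fm Sg k))) = eta X _ (pre (cmp g (al Y))) k.
  move=> Y g k; rewrite /tB Defs.compA pre_comp; exact: eta_id.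
apply: (@yoneda _ _ Z _ _ tA tB).
- move=> g1 g2 H; apply: einj => h; rewrite -(eta_id g1 h) -(eta_id g2 h); exact: H.
- move=> g1 g2 H; apply: (iso_cancel_r (ali _)); apply: (faithful1 qi).
  rewrite -[cmp g1 _]preK -[cmp g2 (al _)]preK; suff -> : pre (cmp g1 (al (fo Sg (fo S X)))) = pre (cmp g2 (al (fo Sg (fo S X)))) by [].
  apply: einj => k; rewrite -(tBc _ g1 k) -(tBc _ g2 k); exact: H.
- set Y := fo S Z.
  pose psi (k : Hom X (fo Sg' Y)) := tA (cmp (al Y) (fm Sg k)).
  have [g0 Hg0] : exists g0, forall k, eta X (fo Sg' Y) g0 k = psi k.
    apply: esurj => a k1 k2; rewrite /psi /tA Defs.fmapD Defs.compDr; exact: l1.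
  have [ai [ai1 ai2]] := ali Y.
  exists (cmp (fm Sg g0) ai) => h.
  have [k Hk] := full1 qi (cmp ai h).
  rewrite -Defs.compA -Hk -Defs.fmapM /tB pre_fm eta_id Hg0 /psi Hk Defs.compA ai2.
  by rewrite Defs.comp1m.
- have [v Hv] : exists v, forall h, eta Z _ v h = tB h.
    apply: esurj => a h1 h2; rewrite /tB pre_lin; exact: l1.
  by exists v => h; rewrite /tA eta_id.
Qed.

End Serre.

Section Main.
Variables (R : realType) (K : fieldType) (T : linCat K) (Sg Sg' : functor T).
Local Notation Hom := (Defs.Hom T).
Local Notation fo := Defs.fobj.
Local Notation dm := (Defs.dimv R).
Hypothesis qi : quasi_inverse Sg Sg'.

Lemma atomic_op M : atomic R (fo Sg') M <-> atomic (C := opCat T) R (fo Sg) M.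
Proof.
split => -[H1 H2]; split => // i Hi.
- have := H2 i Hi; rewrite -(dim_adj_iter R qi) => <-; by [].
- rewrite -(dim_adj_iter R qi); exact: (H2 i Hi).
Qed.

Lemma atomic_set_op n (X : 'I_n -> Obj T) :
  atomic_set R (fo Sg') X <-> atomic_set (C := opCat T) R (fo Sg) X.
Proof.
split => -[H1 H2 H3]; split => //.
- by move=> i; apply/atomic_op.
- by move=> i j; have := H3 j i; rewrite eq_sym.
- by move=> i; apply/atomic_op.
- by move=> i j; have := H3 j i; rewrite eq_sym.
Qed.

Lemma sup_img_eq (A : Type) (P Q : A -> Prop) (f g : A -> \bar R) :
  (forall X, P X <-> Q X) -> (forall X, P X -> f X = g X) ->
  ereal_sup [set f X | X in P] = ereal_sup [set g X | X in Q].
Proof.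
move=> HPQ Hfg.
suff -> : [set f X | X in P] = [set g X | X in Q] by [].
apply/seteqP; split => _ [X HX <-]; exists X.
- by apply/HPQ.
- by rewrite Hfg.
- by apply/HPQ.
- by rewrite Hfg //; apply/HPQ.
Qed.

Lemma ps_true (U : Type) (P : Prop) (a b : U) : P -> (if pselect P then a else b) = a.
Proof. by move=> p; case: pselect. Qed.

Lemma ps_false (U : Type) (P : Prop) (a b : U) : ~ P -> (if pselect P then a else b) = b.
Proof. by move=> p; case: pselect. Qed.

Lemma fpdim_op n (sig sigop : Obj T -> Obj T) :
  (forall A B, dm (Hom (sigop A) B) = dm (Hom A (sig B))) ->
  fpdim R (fo Sg') n sig = fpdim (C := opCat T) R (fo Sg) n sigop.
Proof.
move=> Hs; rewrite /fpdim.
destruct (pselect (exists X : 'I_n -> Obj T, atomic_set R (fo Sg') X)) as [E1|N1];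
destruct (pselect (exists X : 'I_n -> Obj (opCat T), atomic_set (C := opCat T) R (fo Sg) X)) as [E2|N2];
  rewrite /is_left; cbv iota beta.
- apply: sup_img_eq => X; first exact: atomic_set_op.
  move=> _; rewrite -fp_rho_tr; congr fp_rho; apply/matrixP => i j; rewrite !mxE.
  by rewrite -Hs.
- by exfalso; apply: N2; case: E1 => X HX; exists X; apply/atomic_set_op.
- by exfalso; apply: N1; case: E2 => X HX; exists X; apply/atomic_set_op.
- reflexivity.
Qed.

End Main.

Lemma serre_comm_all (K : fieldType) (T : linCat K) (Sg Sg' S S' : functor T) :
  quasi_inverse Sg Sg' -> serre_functor S S' ->
  forall m k X, oiso (zpow (Defs.fobj S) (Defs.fobj S') k (zpow (Defs.fobj Sg) (Defs.fobj Sg') m X))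
                     (zpow (Defs.fobj Sg) (Defs.fobj Sg') m (zpow (Defs.fobj S) (Defs.fobj S') k X)).
Proof.
move=> qi [qS [eta [l1 l2 ei es [_ nY]]]] m k.
have c1 : comm_o (Defs.fobj S) (Defs.fobj Sg).
  move=> X; exact: (serre_comm qi l1 ei es nY X).
have c2 : comm_o (Defs.fobj S') (Defs.fobj Sg).
  apply: (comm_qi qS) => //; exact: pres_fobj.
have c3 : comm_o (Defs.fobj S) (Defs.fobj Sg').
  apply: comm_sym; apply: (comm_qi qi); first exact: pres_fobj.
  exact: comm_sym.
have c4 : comm_o (Defs.fobj S') (Defs.fobj Sg').
  apply: (comm_qi qS) => //; exact: pres_fobj.
apply: comm_zpow => //; exact: pres_fobj.
Qed.

Unset Implicit Arguments.

Theorem proposition3p9 (R : realType) (K : closedFieldType) (T : linCat K)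
    (Sig Sig' : functor T) :
  pretriangulated Sig Sig' ->
  fp_equivalent R (fobj Sig) (fobj Sig')
                  (C2 := opCat T) (fobj Sig') (fobj Sig) /\
  (forall S S' : functor T, serre_functor S S' ->
     fpS_equivalent R (fobj Sig) (fobj Sig') (fobj S) (fobj S')
                      (C2 := opCat T) (fobj Sig') (fobj Sig) (fobj S') (fobj S)).
Proof.
move=> [_ qi _]; split.
- move=> n m _; apply: fpdim_op => // A B.
  exact: (dim_adj_zpow R qi).
- move=> S S' HS n m k _; apply: fpdim_op => // A B.
  have qS : quasi_inverse S S' by case: HS.
  rewrite (dim_adj_zpow R qi) (dim_adj_zpow R qS).
  apply: dim_oiso_r; exact (serre_comm_all qi HS m k B).
Qed.
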